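(* Let $K$ be a compact metric space, let $\varepsilon_1>0$ and $0<\delta<\varepsilon_1/34$, and let $(f_n)$ be a sequence in $C(K)$ (real or complex valued) with $\|f_n\|_\infty=1$. Put $A_n=\{k\in K: f_n^+(k)>\varepsilon_1-\delta\}$ and $B_n=\{k\in K:|f_n(k)|<\delta\}$. Suppose that for every $N$ and every partition $\{1,\dots,N\}=I\cup J$ into disjoint sets, $\bigcap_{n\in I}A_n\cap\bigcap_{n\in J}B_n\neq\emptyset$. Then for every $N$ and all scalars $a_1,\dots,a_N$, $$\Big\|\sum_{j=1}^N a_jf_j\Big\|_\infty\ge\frac{\varepsilon_1}{16}\sum_{j=1}^N|a_j| ,$$ i.e. $(f_n)$ is $\frac{16}{\varepsilon_1}$-equivalent to the unit vector basis of $\ell_1$.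
   Context: For real valued $f\in C(K)$, $f^+=\max(f,0)$; for complex valued $f\in C(K)$, $f^+=\min\big((\operatorname{Re}f)^+,(\operatorname{Im}f)^+\big)$. In the real case the scalars $a_j$ are real, in the complex case complex. *)

(* Defs.v *)
From HB Require Import structures.
From mathcomp Require Import all_boot all_order all_algebra.
From mathcomp Require Import all_classical all_reals all_analysis.
From mathcomp Require Import complex.
Import Order.TTheory GRing.Theory Num.Theory.
Import numFieldNormedType.Exports.
Set Implicit Arguments. Unset Strict Implicit. Unset Printing Implicit Defensive.
Local Open Scope classical_set_scope.
Local Open Scope ring_scope.

Definition supnorm (R : realType) (C : Type) (nrm : C -> R) (K : Type)
  (f : K -> C) : R := sup [set nrm (f k) | k in [set: K]].

Definition posR (R : realType) (x : R) : R := Num.max x 0.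

Definition posC (R : realType) (z : R[i]) : R :=
  Num.min (Num.max (complex.Re z) 0) (Num.max (complex.Im z) 0).

Definition cmod (R : realType) (z : R[i]) : R := Normc.normc z.

(* The claim of the theorem, for a compact metric space K and scalar field C
   (with modulus nrm and positive part pos).  Indices n are 0-based:
   f n, n < N, plays the role of f_{n+1}. *)
Definition ell1_claim (R : realType) (C : numFieldType) (nrm : C -> R)
  (pos : C -> R) (K : metricType R) : Prop :=
  compact [set: K] ->
  forall (eps1 delta : R) (f : nat -> K -> C),
    0 < eps1 -> 0 < delta -> delta < eps1 / 34 ->
    (forall n, continuous (f n)) ->
    (forall n, supnorm nrm (f n) = 1) ->
    (* A_n = [set k | eps1 - delta < pos (f n k)], B_n = [set k | nrm (f n k) < delta];
       for every N and every partition {0..N-1} = I u J (J = complement of I),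
       the intersection of the A_n (n in I) and B_n (n in J) is nonempty *)
    (forall (N : nat) (I : {set 'I_N}), exists k : K,
        forall i : 'I_N,
          (i \in I -> eps1 - delta < pos (f i k)) /\
          (i \notin I -> nrm (f i k) < delta)) ->
    forall (N : nat) (a : 'I_N -> C),
      eps1 / 16 * (\sum_(j < N) nrm (a j))
        <= supnorm nrm (fun k => \sum_(j < N) a j * f j k).

(* Main.v *)
Require Import Defs.
From HB Require Import structures.
From mathcomp Require Import all_boot all_order all_algebra.
From mathcomp Require Import all_classical all_reals all_analysis.
From mathcomp Require Import complex.
From mathcomp Require Import lra.
Import Order.TTheory GRing.Theory Num.Theory.
Import numFieldNormedType.Exports.
Local Open Scope ring_scope.
Local Open Scope classical_set_scope.

Lemma supnorm_ub (R : realType) (C : Type) (nrm : C -> R) (K : Type) (g : K -> C) M k0 :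
  (forall k, nrm (g k) <= M) -> nrm (g k0) <= supnorm nrm g.
Proof.
move=> hM; apply: sup_upper_bound; last by exists k0.
split; first by exists (nrm (g k0)), k0.
by exists M => _ [k _ <-].
Qed.

Lemma supnorm1_bd (R : realType) (C : Type) (nrm : C -> R) (K : Type) (g : K -> C) :
  supnorm nrm g = 1 -> forall k, nrm (g k) <= 1.
Proof.
move=> h k; have [hs|hs] := pselect (has_sup [set nrm (g k) | k in [set: K]]).
  by rewrite -h; apply: sup_upper_bound => //; exists k.
by move: h; rewrite /supnorm sup_out // => /eqP; rewrite eq_sym oner_eq0.
Qed.

Lemma quarter (R : realType) (F : 'I_4 -> R) :
  exists m, (\sum_(m < 4) F m) / 4 <= F m.
Proof.
apply/not_existsP => H.
have H' : forall m, F m < (\sum_(m < 4) F m) / 4 by move=> m; rewrite ltNge; apply/negP/H.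
move: H'; rewrite !big_ord_recl big_ord0 /= => H'.
have := H' ord0; have := H' (lift ord0 ord0); have := H' (lift ord0 (lift ord0 ord0)).
have := H' (lift ord0 (lift ord0 (lift ord0 ord0))). lra.
Qed.
Section Generic.
Variables (R : realType) (C : numFieldType) (nrm : C -> R) (pos : C -> R) (K : metricType R).
Variables (L : C -> R) (w : C -> R) (b : 'I_4 -> C) (Q : pred C).
Hypotheses (L0 : L 0 = 0) (LD : forall x y, L (x + y) = L x + L y)
 (Lnrm : forall x, L x <= nrm x) (nrm0 : nrm 0 = 0)
 (nrmD : forall x y, nrm (x+y) <= nrm x + nrm y)
 (nrmM : forall x y, nrm (x*y) = nrm x * nrm y) (nrmb : forall m, nrm (b m) = 1)
 (nrmN : forall x, nrm (- x) = nrm x)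
 (nrm_ge0 : forall x, 0 <= nrm x) (nrmw : forall x, nrm x <= w x)
 (wb : forall m x, w (b m * x) = w x)
 (Qex : forall x, exists m, Q (b m * x))
 (key : forall c x z, 0 < c -> Q x -> c < pos z -> c * w x <= L (x * z)).

Lemma Lsum N (F : 'I_N -> C) : L (\sum_(j < N) F j) = \sum_(j < N) L (F j).
Proof. by elim/big_rec2: _ => // i x y _ <-; rewrite LD. Qed.

Lemma nrmsum N (F : 'I_N -> C) G : (forall j, nrm (F j) <= G j) ->
  nrm (\sum_(j < N) F j) <= \sum_(j < N) G j.
Proof.
move=> h; elim/big_rec2: _ => [|i x y _ hy]; first by rewrite nrm0.
by apply: le_trans (nrmD _ _) _; apply: lerD.
Qed.

Lemma LN x : - nrm x <= L x.
Proof.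
have : L x + L (- x) = 0 by rewrite -LD subrr.
have := Lnrm (- x); rewrite nrmN; lra.
Qed.

Lemma generic : ell1_claim nrm pos K.
Proof.
move=> _ eps1 delta f e1 d0 de fc fn hyp N a.
set c := eps1 - delta.
have c0 : 0 < c by rewrite /c; lra.
have fb : forall n k, nrm (f n k) <= 1 by move=> n; apply: supnorm1_bd.
set g := fun k => \sum_(j < N) a j * f j k.
have gb : forall k, nrm (g k) <= \sum_(j < N) nrm (a j).
  move=> k; apply: nrmsum => j; rewrite nrmM.
  by rewrite -[X in _ <= X]mulr1; apply: ler_wpM2l.
pose quad x : 'I_4 := odflt ord0 [pick m | Q (b m * x)].
have quadP : forall x, Q (b (quad x) * x).
  move=> x; rewrite /quad; case: pickP => //= H.
  by have [m Hm] := Qex x; rewrite H in Hm.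
pose W := \sum_(j < N) w (a j).
have part : W = \sum_(m < 4) \sum_(j < N | quad (a j) == m) w (a j).
  by rewrite /W (partition_big (fun j => quad (a j)) xpredT).
have [m hm] := @quarter R (fun m => \sum_(j < N | quad (a j) == m) w (a j)).
rewrite /= -part in hm.
have [k hk] := hyp N [set j | quad (a j) == m]%SET.
have W0 : 0 <= W by apply: sumr_ge0 => j _; apply: le_trans (nrmw _).
have SW : \sum_(j < N) nrm (a j) <= W by apply: ler_sum => j _.
have Lg : L (b m * g k) <= supnorm nrm g.
  apply: le_trans (Lnrm _) _; rewrite nrmM nrmb mul1r.
  exact: supnorm_ub (gb).
apply: le_trans Lg.
rewrite /g /= [b m * _]mulr_sumr Lsum [X in _ <= X](bigID (fun j => quad (a j) == m)) /=.
rewrite /W (bigID (fun j => quad (a j) == m)) /= in hm W0 SW.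
set TI := \sum_(j < N | _) w (a j) in hm W0 SW.
set TJ := \sum_(j < N | _) w (a j) in hm W0 SW.
have h1 : c * TI <= \sum_(j < N | quad (a j) == m) L (b m * (a j * f j k)).
  rewrite /TI mulr_sumr; apply: ler_sum => j /eqP hj.
  have [hI _] := hk j; rewrite mulrA -(wb m); apply: key => //.
    by rewrite -hj; apply: quadP.
  by apply: hI; rewrite inE hj.
have h2 : - (delta * TJ) <= \sum_(j < N | quad (a j) != m) L (b m * (a j * f j k)).
  rewrite /TJ mulr_sumr -sumrN; apply: ler_sum => j hj.
  have [_ hJ] := hk j.
  have hJ' : nrm (f j k) < delta by apply: hJ; rewrite inE.
  apply: le_trans (LN _); rewrite lerN2 !nrmM nrmb mul1r mulrC.
  apply: ler_pM => //; first exact: ltW.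
have TJ0 : 0 <= TJ by apply: sumr_ge0 => j _; apply: le_trans (nrmw _).
have TI0 : 0 <= TI by apply: sumr_ge0 => j _; apply: le_trans (nrmw _).
have H1 : 0 <= eps1 * (TI - (TI + TJ) / 4) by apply: mulr_ge0; lra.
have H2 : 0 <= (TI + TJ) * (3 * eps1 / 16 - delta) by apply: mulr_ge0; lra.
have H3 : eps1 / 16 * \sum_(j < N) nrm (a j) <= eps1 / 16 * (TI + TJ).
  by apply: ler_wpM2l => //; lra.
rewrite /c in h1. apply: le_trans H3 _. have := lerD h1 h2. nra.
Qed.
End Generic.
Lemma realcase (R : realType) (K : metricType R) :
  ell1_claim (C := R) (@Num.norm R R) (@posR R) K.
Proof.
apply: (@generic R R _ _ K id (@Num.norm R R) (fun m : 'I_4 => if odd m then -1 else 1)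
  (fun x => 0 <= x)) => //.
- exact: ler_norm.
- exact: normr0.
- exact: ler_normD.
- exact: normrM.
- by move=> m; case: ifP => _; rewrite ?normrN normr1.
- exact: normrN.
- by move=> m x; case: ifP => _; rewrite ?mulN1r ?mul1r ?normrN.
- move=> x; have [hx|hx] := lerP 0 x.
    by exists ord0; rewrite mul1r.
  by exists (lift ord0 ord0); rewrite /= mulN1r oppr_ge0 ltW.
- move=> c x z c0 x0; rewrite /posR lt_max (ltNge c 0) (ltW c0) orbF => cz /=.
  by rewrite ger0_norm // mulrC ler_wpM2l // ltW.
Qed.
Definition bc (R : realType) (m : 'I_4) : R[i] :=
  match val m with 0 => (1 +i* 0)%C | 1 => (0 +i* (-1))%C | 2 => ((-1) +i* 0)%C | _ => (0 +i* 1)%C end.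

Definition wc (R : realType) (x : R[i]) : R := `|complex.Re x| + `|complex.Im x|.

Lemma complexcase (R : realType) (K : metricType R) :
  ell1_claim (C := R[i]) (@cmod R) (@posC R) K.
Proof.
apply: (@generic R R[i] _ _ K (@complex.Im R) (@wc R) (@bc R)
  (fun x => (0 <= complex.Re x) && (0 <= complex.Im x))) => //.
- by case=> ? ? [? ?].
- case=> p q; rewrite /cmod /=; apply: le_trans (ler_norm q) _.
  rewrite -sqrtr_sqr; apply: ler_wsqrtr; rewrite lerDr; exact: sqr_ge0.
- exact: Normc.normc0.
- exact: le_normcD.
- exact: Normc.normcM.
- by case=> [[|[|[|[|]]]] ?] //=; rewrite /cmod /= ?sqrrN expr1n expr0n /= ?addr0 ?add0r sqrtr1.
- exact: normcN.
- by case=> p q; rewrite /cmod /= sqrtr_ge0.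
- case=> p q; rewrite /cmod /wc /= -[X in _ <= X]ger0_norm ?addr_ge0 //.
  rewrite -sqrtr_sqr; apply: ler_wsqrtr; rewrite sqrrD !real_normK ?num_real //.
  have : 0 <= `|p| * `|q| *+ 2 by rewrite mulrn_wge0 // mulr_ge0.
  lra.
- case=> [[|[|[|[|]]]] ?] [p q]; rewrite /wc //=.
  all: rewrite ?mul0r ?mul1r ?mulN1r ?subr0 ?sub0r ?addr0 ?add0r ?opprK ?normrN //.
  + by change (`|q| + `|p| = `|p| + `|q| :> R); rewrite addrC.
  + by change (`|q| + `|p| = `|p| + `|q| :> R); rewrite addrC.
- case=> p q; have [hp|hp] := lerP 0 p; have [hq|hq] := lerP 0 q.
  + by exists ord0; rewrite /= !mul1r !mul0r subr0 addr0 hp hq.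
  + by exists (@Ordinal 4 3 isT); rewrite /= ?mul0r ?mul1r ?mulN1r ?subr0 ?sub0r ?addr0 ?add0r ?opprK ?oppr_ge0 ?hp ?hq ?ltW.
  + by exists (@Ordinal 4 1 isT); rewrite /= ?mul0r ?mul1r ?mulN1r ?subr0 ?sub0r ?addr0 ?add0r ?opprK ?oppr_ge0 ?hp ?hq ?ltW.
  + by exists (@Ordinal 4 2 isT); rewrite /= ?mul0r ?mul1r ?mulN1r ?subr0 ?sub0r ?addr0 ?add0r ?opprK ?oppr_ge0 ?hp ?hq ?ltW.
- move=> c [p q] [u v] c0 /andP[/= hp hq]; rewrite /posC /= lt_min !lt_max.
  rewrite (ltNge c 0) (ltW c0) !orbF => /andP[cu cv].
  rewrite /wc /= !ger0_norm //; nra.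
Qed.

Local Open Scope ring_scope.

Theorem mainTheorem12 (R : realType) (K : metricType R) :
  ell1_claim (C := R) (@Num.norm R R) (@posR R) K /\
  ell1_claim (C := R[i]) (@cmod R) (@posC R) K.
Proof. split; [exact: realcase | exact: complexcase]. Qed.
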